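(* Let $(X,d)$ and $(Y,\rho)$ be compact metric spaces, let $F=\{f_1,\dots,f_k\}$ be a multiple mapping on $X$ and $G=\{g_1,\dots,g_m\}$ a multiple mapping on $Y$, and let $T:X\to Y$ be a topological conjugacy from $(X,F)$ to $(Y,G)$. Then $F$ is Hausdorff metric sensitive (with respect to $d_H$) if and only if $G$ is Hausdorff metric sensitive (with respect to $\rho_H$).
   Context: A multiple mapping $F=\{f_1,\dots,f_k\}$ on $X$ is a finite tuple of continuous self-maps of $X$; for $x\in X$ and $n\ge1$, $F(x)=\{f_1(x),\dots,f_k(x)\}$ and $F^n(x)=\{f_{i_1}f_{i_2}\cdots f_{i_n}(x)\mid i_1,\dots,i_n\in\{1,\dots,k\}\}$; for $A\subset X$, $F(A)=\bigcup_{a\in A}F(a)$. $d_H$ (resp. $\rho_H$) denotes the Hausdorff metric $d_H(A,B)=\max\{\sup_{a\in A}\inf_{b\in B}d(a,b),\sup_{b\in B}\inf_{a\in A}d(a,b)\}$ on nonempty compact subsets. $F$ is Hausdorff metric sensitive if there is $\delta>0$ such that for every nonempty open $U\subset X$ there exist $x,y\in U$ and $n\in\mathbb{Z}^+=\{1,2,\dots\}$ with $d_H(F^n(x),F^n(y))>\delta$. A topological conjugacy from $(X,F)$ to $(Y,G)$ is a homeomorphism $T:X\to Y$ such that $T(F(x))=G(T(x))$ for all $x\in X$. *)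

(* Defs.v *)
From HB Require Import structures.
From mathcomp Require Import all_boot all_order all_algebra.
From mathcomp Require Import all_classical all_reals all_analysis.
Set Implicit Arguments. Unset Strict Implicit. Unset Printing Implicit Defensive.
Import Order.TTheory GRing.Theory Num.Theory.
Local Open Scope classical_set_scope.
Local Open Scope ring_scope.

(* A multiple mapping F = {f_1,...,f_k} is represented by f : 'I_k -> X -> X. *)

Definition mm_img {X : Type} {k : nat} (f : 'I_k -> X -> X) (x : X) : set X :=
  [set f i x | i in [set: 'I_k]].

Definition mm_iter {X : Type} {k : nat} (f : 'I_k -> X -> X) (n : nat) (x : X)
  : set X :=
  [set y | exists w : seq 'I_k, size w = n /\ y = foldr (fun i z => f i z) x w].

Definition hausdorff_dist {R : realType} {X : metricType R} (A B : set X) : R :=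
  Num.max (sup [set inf [set mdist a b | b in B] | a in A])
          (sup [set inf [set mdist a b | a in A] | b in B]).

Definition hm_sensitive {R : realType} {X : metricType R} {k : nat}
  (f : 'I_k -> X -> X) : Prop :=
  exists2 delta : R, 0 < delta &
    forall U : set X, open U -> U !=set0 ->
      exists x y (n : nat), [/\ U x, U y, (0 < n)%N &
        delta < hausdorff_dist (mm_iter f n x) (mm_iter f n y)].

Definition homeomorphism {X Y : topologicalType} (T : X -> Y) : Prop :=
  continuous T /\ exists S : Y -> X, [/\ continuous S, cancel T S & cancel S T].

Definition top_conjugacy {X Y : topologicalType} {k m : nat}
  (f : 'I_k -> X -> X) (g : 'I_m -> Y -> Y) (T : X -> Y) : Prop :=
  homeomorphism T /\ forall x : X, T @` (mm_img f x) = mm_img g (T x).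

(* Main.v *)
Require Import Defs.
From HB Require Import structures.
From mathcomp Require Import all_boot all_order all_algebra.
From mathcomp Require Import all_classical all_reals all_analysis.
Import Order.TTheory GRing.Theory Num.Theory.
Local Open Scope classical_set_scope.
Local Open Scope ring_scope.

Lemma unif_cont_compact (R : realType) (X Y : metricType R)
  (hX : compact [set: X]) (S : X -> Y) (hS : continuous S) (e : R) :
  0 < e -> exists2 eta : R, 0 < eta &
    forall a b, mdist a b < eta -> mdist (S a) (S b) < e.
Proof.
move=> e0.
have H : \forall eta \near 0^'+, [set: X] `<=`
   (fun y => forall z, mdist y z < eta -> mdist (S y) (S z) < e).
  apply: ((proj1 (compact_near_coveringP [set: X])) hX R (0^'+)
   (fun eta y => forall z, mdist y z < eta -> mdist (S y) (S z) < e)) => x _.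
  have : nbhs (S x) (ball (S x) (e / 2)) by apply: nbhsx_ballx; rewrite divr_gt0.
  move=> /hS /nbhs_ballP [r /= r0 Hr].
  exists (ball x (r / 2), [set eta | eta < r / 2]).
    split => //=; first by apply: nbhsx_ballx; rewrite divr_gt0.
    by apply: nbhs_right_lt; rewrite divr_gt0.
  move=> [x' eta] [/= Hx' Heta] z Hz.
  move: Hx'; rewrite ballEmdist /= => Hx'.
  have Hz' : ball x r z.
    rewrite ballEmdist /=.
    apply: (le_lt_trans (metric_triangle x x' z)).
    by rewrite [r]splitr ltrD // (lt_trans Hz Heta).
  have Hx'' : ball x r x'.
    by rewrite ballEmdist /= (lt_trans Hx') // ltr_pdivrMr // ltr_pMr // ltr1n.
  have := Hr _ Hz'; have := Hr _ Hx''; rewrite !ballEmdist /= => h1 h2.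
  apply: (le_lt_trans (metric_triangle _ (S x) _)).
  by rewrite [e]splitr ltrD // metric_sym.
  have [eta [eta0 Heta]] := filter_ex (filterI (nbhs_right_gt 0) H).
  by exists eta => // a b; apply: Heta.
Qed.

Lemma bounded_compact (R : realType) (X : metricType R)
  (hX : compact [set: X]) : exists M : R, forall a b : X, mdist a b <= M.
Proof.
case: (pselect (exists x0 : X, True)) => [[x0 _]|nX]; last first.
  by exists 0 => a; exfalso; apply: nX; exists a.
have H : \forall M \near +oo, [set: X] `<=` (fun y => mdist y x0 < M).
  apply: ((proj1 (compact_near_coveringP [set: X])) hX R (+oo)
  (fun M y => mdist y x0 < M)) => x _.
  exists (ball x 1, [set M | mdist x x0 + 1 < M]).
    split => //=; first by apply: nbhsx_ballx.
    by apply: nbhs_pinfty_gt; rewrite num_real.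
  move=> [x' M] [/= Hx' HM] /=.
  move: Hx'; rewrite ballEmdist /= => Hx'.
  apply: (le_lt_trans (metric_triangle _ x _)).
  by apply: le_lt_trans HM; rewrite addrC lerD // metric_sym ltW.
  have [M HM] := filter_ex H.
  exists (M + M) => a b.
  apply: (le_trans (metric_triangle _ x0 _)).
  by rewrite lerD // ?(metric_sym x0) ltW //; apply: HM.
Qed.
Lemma side (R : realType) (X Y : Type) (A B : set X)
  (dX : X -> X -> R) (dY : Y -> Y -> R) (T : X -> Y) (M eta delta : R) :
  (forall a b, 0 <= dX a b) -> (forall a b, 0 <= dY a b) ->
  (forall a b, dY a b <= M) -> A !=set0 -> B !=set0 ->
  (forall a b, dY (T a) (T b) < eta -> dX a b < delta) ->
  delta < sup [set inf [set dX a b | b in B] | a in A] ->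
  eta <= sup [set inf [set dY a b | b in T @` B] | a in T @` A].
Proof.
move=> dX0 dY0 dYM [a0 Aa0] [b0 Bb0] Hu.
move=> /sup_gt; case; first by exists (inf [set dX a0 b | b in B]), a0.
move=> _ [a Aa <-] Hd.
have Hb : forall b, B b -> eta <= dY (T a) (T b).
  move=> b Bb; rewrite leNgt; apply/negP => /Hu.
  apply/negP; rewrite -leNgt; apply: (le_trans (ltW Hd)).
  apply: ge_inf; last by exists b.
  by exists 0 => _ [c _ <-].
have Hi : eta <= inf [set dY (T a) b | b in T @` B].
  apply: lb_le_inf; first by exists (dY (T a) (T b0)), (T b0) => //; exists b0.
  by move=> _ [_ [b Bb <-] <-]; apply: Hb.
apply: (le_trans Hi); apply: ub_le_sup; last by exists (T a) => //; exists a.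
exists M => _ [_ [c Ac <-] <-].
apply: (le_trans _ (dYM (T c) (T b0))).
apply: ge_inf; last by exists (T b0) => //; exists b0.
by exists 0 => _ [y _ <-].
Qed.

Lemma iter_conj (X Y : Type) (k m : nat) (f : 'I_k -> X -> X) (g : 'I_m -> Y -> Y)
  (T : X -> Y) (hc : forall x, T @` mm_img f x = mm_img g (T x)) n x :
  T @` mm_iter f n x = mm_iter g n (T x).
Proof.
elim: n x => [|n IH] x.
  apply/seteqP; split.
    by move=> _ [_ [w [/size0nil -> ->]] <-]; exists [::].
  by move=> _ [w [/size0nil -> ->]]; exists x => //; exists [::].
apply/seteqP; split.
- move=> _ [_ [[|i w] [//= [sw] ->]] <-].
  have : (T @` mm_iter f n x) (T (foldr (fun i z => f i z) x w)).
    by exists (foldr (fun i z => f i z) x w) => //; exists w.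
  rewrite IH => -[w' [sw' ew']].
  have : (T @` mm_img f (foldr (fun i z => f i z) x w))
     (T (f i (foldr (fun i z => f i z) x w))) by exists (f i (foldr (fun i z => f i z) x w)) => //; exists i.
  rewrite hc => -[j _ ej].
  by exists (j :: w'); split; rewrite /= ?sw' // -ej ew'.
- move=> _ [[|j w'] [//= [sw'] ->]].
  have : (mm_iter g n (T x)) (foldr (fun i z => g i z) (T x) w') by exists w'.
  rewrite -IH => -[z [w [sw ez]] Tz].
  have : (mm_img g (T z)) (g j (T z)) by exists j.
  rewrite -hc => -[_ [i _ <-] ei].
  exists (f i z); first by exists (i :: w); split; rewrite /= ?sw // ez.
  by rewrite ei Tz.
Qed.

Lemma mm_iter_ne (X : Type) (k : nat) (hk : (0 < k)%N) (f : 'I_k -> X -> X) n x :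
  mm_iter f n x !=set0.
Proof.
by exists (foldr (fun i z => f i z) x (nseq n (Ordinal hk))), (nseq n (Ordinal hk));
  rewrite size_nseq.
Qed.

Lemma dir (R : realType) (X Y : metricType R) (hY : compact [set: Y])
  (k m : nat) (hk : (0 < k)%N)
  (f : 'I_k -> X -> X) (g : 'I_m -> Y -> Y) (T : X -> Y) (S : Y -> X)
  (Tc : continuous T) (Sc : continuous S) (TS : cancel T S) (ST : cancel S T)
  (hc : forall x, T @` mm_img f x = mm_img g (T x)) :
  hm_sensitive f -> hm_sensitive g.
Proof.
case=> delta d0 Hs.
have [eta eta0 Hu] := @unif_cont_compact R Y X hY S Sc delta d0.
have Hu' : forall a b, mdist (T a) (T b) < eta -> mdist a b < delta.
  by move=> a b /Hu; rewrite !TS.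
have Hu'' : forall a b, mdist (T b) (T a) < eta -> mdist b a < delta.
  by move=> a b /Hu'.
have [M HM] := @bounded_compact R Y hY.
exists (eta / 2); first by rewrite divr_gt0.
move=> U oU [y Uy].
have oV : open (T @^-1` U) by apply: open_comp => // z _; apply: Tc.
have [x1 [x2 [n [Vx1 Vx2 n0 Hd]]]] : exists x1 x2 n,
   [/\ (T @^-1` U) x1, (T @^-1` U) x2, (0 < n)%N &
   delta < hausdorff_dist (mm_iter f n x1) (mm_iter f n x2)].
  by apply: Hs => //; exists (S y); rewrite /= ST.
exists (T x1), (T x2), n; split => //.
rewrite -!(@iter_conj X Y k m f g T hc).
have he : eta / 2 < eta by rewrite ltr_pdivrMr // ltr_pMr // ltr1n.
move: Hd; rewrite /hausdorff_dist !lt_max => /orP [H|H]; apply/orP.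
- left; apply: (lt_le_trans he).
  apply: (@side R X Y _ _ mdist mdist T M eta delta _ _ _ _ _ Hu' H) => //;
  by [apply: mdist_ge0 | apply: mm_iter_ne].
- right; apply: (lt_le_trans he).
  apply: (@side R X Y _ _ (fun b a => mdist a b) (fun b a => mdist a b) T M eta delta
     _ _ _ _ _ Hu'' H) => //;
  by [move=> *; apply: mdist_ge0 | apply: mm_iter_ne].
Qed.

Theorem theorem4p2 (R : realType) (X Y : metricType R)
  (hX : compact [set: X]) (hY : compact [set: Y])
  (k m : nat) (hk : (0 < k)%N) (hm : (0 < m)%N)
  (f : 'I_k -> X -> X) (g : 'I_m -> Y -> Y)
  (hf : forall i, continuous (f i)) (hg : forall j, continuous (g j))
  (T : X -> Y) (hT : top_conjugacy f g T) :
  hm_sensitive f <-> hm_sensitive g.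
Proof.
case: hT => [[Tc [S [Sc TS ST]]] hc].
split; first exact: (@dir R X Y hY k m hk f g T S Tc Sc TS ST hc).
apply: (@dir R Y X hX m k hm g f S T Sc Tc ST TS) => y.
rewrite -{1}(ST y) -hc.
apply/seteqP; split.
- by move=> _ [_ [x Fx <-] <-]; rewrite TS.
- by move=> x Fx; exists (T x); [exists x|rewrite TS].
Qed.
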